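(* Two orthogonal constraints are dependent if and only if they are the same line, possibly with opposite orientations. Three orthogonal constraints are dependent if and only if (i) two of them are dependent, or (ii) the three constraints are coplanar with $\ell_0$, or (iii) the three constraints are concurrent with $\ell_0$. Four orthogonal constraints are dependent if and only if (i) three of them are dependent, or (ii) the four constraints are in hyperboloidal position, or (iii) two of the lines are concurrent with $\ell_0$ and the other two are coplanar with $\ell_0$.
   Context: Fix coordinates in $\mathbb{R}^3$ so that the line $\ell_0$ is the $z$-axis. A constraint is an oriented line meeting $\ell_0$ in exactly one point; for $\lambda,\alpha,\delta\in\mathbb{R}$, $g(\lambda,\alpha,\delta)$ denotes the constraint through $(0,0,\lambda)$ and $(\cos\alpha,\sin\alpha,\lambda+\delta)$, oriented from the first point to the second (every constraint has this form). A constraint is orthogonal if it is orthogonal to $\ell_0$, i.e. $\delta=0$. The normal of $g=g(\lambda,\alpha,\delta)$ is $\eta_g=\big((1-\lambda)\sin\alpha,-(1-\lambda)\cos\alpha,\lambda\sin\alpha,-\lambda\cos\alpha\big)\in\mathbb{R}^4$. A family of constraints is dependent if their normals are linearly dependent. Lines are coplanar with $\ell_0$ if they lie in a common plane containing $\ell_0$, and concurrent with $\ell_0$ if they pass through a common point of $\ell_0$. Four or more lines are in hyperboloidal position if they belong to the same family of rulings of a nondegenerate quadric surface. *)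

(* Defs.v *)
From HB Require Import structures.
From mathcomp Require Import all_boot all_order all_algebra.
From mathcomp Require Import boolp classical_sets functions reals trigo.
Set Implicit Arguments. Unset Strict Implicit. Unset Printing Implicit Defensive.
Import Order.TTheory GRing.Theory Num.Theory.
Local Open Scope ring_scope.
Local Open Scope classical_set_scope.

Section Constraints.
Variable R : realType.

Definition cstr := (R * R * R)%type.
Definition c_lam (g : cstr) : R := g.1.1.
Definition c_alpha (g : cstr) : R := g.1.2.
Definition c_delta (g : cstr) : R := g.2.

Definition pt3 (x y z : R) : 'rV[R]_3 := \row_(i < 3) [:: x; y; z]`_i.

Definition l0 : set 'rV[R]_3 := [set p | exists t : R, p = pt3 0 0 t].

Definition c_base (g : cstr) : 'rV[R]_3 := pt3 0 0 (c_lam g).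
Definition c_dir (g : cstr) : 'rV[R]_3 :=
  pt3 (cos (c_alpha g)) (sin (c_alpha g)) (c_delta g).

Definition line_of (g : cstr) : set 'rV[R]_3 :=
  [set p | exists t : R, p = c_base g + t *: c_dir g].

Definition orthogonal_c (g : cstr) : Prop := c_delta g = 0.

Definition normal_c (g : cstr) : 'rV[R]_4 :=
  let l := c_lam g in let a := c_alpha g in
  \row_(i < 4) [:: (1 - l) * sin a; - ((1 - l) * cos a); l * sin a; - (l * cos a)]`_i.

Definition dependent_c (s : seq cstr) : Prop := ~~ free (map normal_c s).

Definition plane_c (n : 'rV[R]_3) (c : R) : set 'rV[R]_3 :=
  [set p | (p *m n^T) 0 0 = c].

Definition coplanar_l0 (s : seq cstr) : Prop :=
  exists (n : 'rV[R]_3) (c : R), n != 0 /\ l0 `<=` plane_c n c /\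
    forall g, g \in s -> line_of g `<=` plane_c n c.

Definition concurrent_l0 (s : seq cstr) : Prop :=
  exists q : 'rV[R]_3, l0 q /\ forall g, g \in s -> line_of g q.

(* quadric surfaces: zero set of the quadratic form of a symmetric 4x4
   matrix in homogeneous coordinates (x,y,z,1); nondegenerate = det <> 0 *)
Definition quad_val (A : 'M[R]_(3 + 1)) (p : 'rV[R]_3) : R :=
  let ph : 'rV[R]_(3 + 1) := row_mx p (1 : 'rV[R]_1) in (ph *m A *m ph^T) 0 0.

Definition nondeg_quadric (A : 'M[R]_(3 + 1)) : Prop := A^T = A /\ \det A != 0.

Definition on_quadric (A : 'M[R]_(3 + 1)) (g : cstr) : Prop :=
  forall p, line_of g p -> quad_val A p = 0.

Definition parallel_c (g h : cstr) : Prop := exists k : R, c_dir g = k *: c_dir h.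

(* lines on a nondegenerate (doubly ruled) quadric lie in the same family of
   rulings iff they coincide or are projectively disjoint (disjoint in R^3
   and not parallel_c, i.e. not meeting at infinity); lines of opposite
   families always meet in projective space. *)
Definition same_ruling (g h : cstr) : Prop :=
  line_of g = line_of h \/ (line_of g `&` line_of h = set0 /\ ~ parallel_c g h).

Definition hyperboloidal (s : seq cstr) : Prop :=
  exists A : 'M[R]_(3 + 1), nondeg_quadric A /\
    (forall g, g \in s -> on_quadric A g) /\
    (forall g h, g \in s -> h \in s -> same_ruling g h).

End Constraints.

(* Main.v *)
Require Import Defs.
From HB Require Import structures.
From mathcomp Require Import all_boot all_order all_algebra.
From mathcomp Require Import boolp classical_sets functions reals trigo.
From mathcomp Require Import ring lra.
Import Order.TTheory GRing.Theory Num.Theory.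
Local Open Scope ring_scope.
Local Open Scope classical_set_scope.
Set Implicit Arguments. Unset Strict Implicit. Unset Printing Implicit Defensive.


Section S.
Variable R : realType.
Implicit Types g : cstr R.
Definition sn g := sin (c_alpha g).
Definition cs g := cos (c_alpha g).
Definition lm g := c_lam g.

Lemma unitcs g : cs g ^+ 2 + sn g ^+ 2 = 1.
Proof. exact: cos2Dsin2. Qed.

Lemma depE (s : seq (cstr R)) : dependent_c s <->
  exists k : 'I_(size s) -> R, (exists i, k i != 0) /\
    \sum_(i < size s) k i *: (map (@normal_c R) s)`_i = 0.
Proof.
rewrite /dependent_c; split.
- move/negP=> Hnf; apply: contrapT => Hne; apply: Hnf.
  have -> : free (map (@normal_c R) s) = free (in_tuple (map (@normal_c R) s)) by [].
  apply/freeP => /=; rewrite size_map => k Hk i.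
  apply/eqP; apply/negPn/negP => Hki; apply: Hne; exists k; split; first by exists i.
  by [].
- case=> k [[i Hi] Hk]; apply/negP.
  have -> : free (map (@normal_c R) s) = free (in_tuple (map (@normal_c R) s)) by [].
  move/freeP => /=; rewrite size_map => H.
  by move: (H k Hk i); apply/eqP.
Qed.

Definition Zq4 (k1 k2 k3 k4 : R) g1 g2 g3 g4 :=
  [/\ k1 * sn g1 + k2 * sn g2 + k3 * sn g3 + k4 * sn g4 = 0,
      k1 * cs g1 + k2 * cs g2 + k3 * cs g3 + k4 * cs g4 = 0,
      k1 * lm g1 * sn g1 + k2 * lm g2 * sn g2 + k3 * lm g3 * sn g3 + k4 * lm g4 * sn g4 = 0 &
      k1 * lm g1 * cs g1 + k2 * lm g2 * cs g2 + k3 * lm g3 * cs g3 + k4 * lm g4 * cs g4 = 0].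

Lemma ord4_cases (i : 'I_4) : [\/ i = ord0 :> 'I_4, i = lift ord0 ord0 :> 'I_4, i = lift ord0 (lift ord0 ord0) :> 'I_4 | i = lift ord0 (lift ord0 (lift ord0 ord0)) :> 'I_4].
Proof. by case: i => [[|[|[|[|n]]]] Hi]; [constructor 1|constructor 2|constructor 3|constructor 4|]; try (apply: val_inj; done); exfalso; by []. Qed.

Lemma dep4E g1 g2 g3 g4 : dependent_c [:: g1; g2; g3; g4] <->
  exists k1 k2 k3 k4, (k1 != 0 \/ k2 != 0 \/ k3 != 0 \/ k4 != 0) /\ Zq4 k1 k2 k3 k4 g1 g2 g3 g4.
Proof.
rewrite depE; split.
- case=> k [[i Hi] Hk].
  move/rowP: Hk => Hk.
  exists (k ord0), (k (lift ord0 ord0)), (k (lift ord0 (lift ord0 ord0))), (k (lift ord0 (lift ord0 (lift ord0 ord0)))); split.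
    case: (ord4_cases i) => -> in Hi; tauto.
  have E0 := Hk 0; have E1 := Hk 1; have E2 := Hk 2%:R; have E3 := Hk 3%:R.
  move: E0 E1 E2 E3; rewrite !summxE !big_ord_recl !big_ord0 /= !mxE /=.
  rewrite /Zq4 /sn /cs /lm.
  move=> E0 E1 E2 E3. split; lra.
- case=> k1 [k2 [k3 [k4 [Hne [Z1 Z2 Z3 Z4]]]]].
  exists (fun i : 'I_4 => [:: k1; k2; k3; k4]`_i); split.
    case: Hne => [H|[H|[H|H]]]; [exists ord0|exists (lift ord0 ord0)|exists (lift ord0 (lift ord0 ord0))|exists (lift ord0 (lift ord0 (lift ord0 ord0)))]; exact: H.
  apply/rowP => j; rewrite summxE !big_ord_recl !big_ord0 /= !mxE.
  move: Z1 Z2 Z3 Z4; rewrite /sn /cs /lm => Z1 Z2 Z3 Z4.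
  case: (ord4_cases j) => -> /=; lra.
Qed.

Lemma dep3E g1 g2 g3 : dependent_c [:: g1; g2; g3] <->
  exists k1 k2 k3, (k1 != 0 \/ k2 != 0 \/ k3 != 0) /\ Zq4 k1 k2 k3 0 g1 g2 g3 g1.
Proof.
rewrite depE; split.
- case=> k [[i Hi] Hk].
  move/rowP: Hk => Hk.
  exists (k ord0), (k (lift ord0 ord0)), (k (lift ord0 (lift ord0 ord0))); split.
    have : [\/ i = ord0 :> 'I_3, i = lift ord0 ord0 :> 'I_3 | i = lift ord0 (lift ord0 ord0) :> 'I_3].
      by case: (i) => [[|[|[|n]]] Hi']; [constructor 1|constructor 2|constructor 3|]; try (apply: val_inj; done).
    move=> Hc; case: Hc => -> in Hi; tauto.
  have E0 := Hk 0; have E1 := Hk 1; have E2 := Hk 2%:R; have E3 := Hk 3%:R.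
  move: E0 E1 E2 E3; rewrite !summxE !big_ord_recl !big_ord0 /= !mxE /=.
  rewrite /Zq4 /sn /cs /lm.
  move=> E0 E1 E2 E3. split; lra.
- case=> k1 [k2 [k3 [Hne [Z1 Z2 Z3 Z4]]]].
  exists (fun i : 'I_3 => [:: k1; k2; k3]`_i); split.
    case: Hne => [H|[H|H]]; [exists ord0|exists (lift ord0 ord0)|exists (lift ord0 (lift ord0 ord0))]; exact: H.
  apply/rowP => j; rewrite summxE !big_ord_recl big_ord0 /= !mxE.
  move: Z1 Z2 Z3 Z4; rewrite /sn /cs /lm => Z1 Z2 Z3 Z4.
  case: (ord4_cases j) => -> /=; lra.
Qed.

Lemma dep2E g1 g2 : dependent_c [:: g1; g2] <->
  exists k1 k2, (k1 != 0 \/ k2 != 0) /\ Zq4 k1 k2 0 0 g1 g2 g1 g1.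
Proof.
rewrite depE; split.
- case=> k [[i Hi] Hk].
  move/rowP: Hk => Hk.
  exists (k ord0), (k (lift ord0 ord0)); split.
    have : i = ord0 :> 'I_2 \/ i = lift ord0 ord0 :> 'I_2.
      by case: (i) => [[|[|n]] Hi']; [left|right|]; try (apply: val_inj; done).
    move=> Hc; case: Hc => -> in Hi; tauto.
  have E0 := Hk 0; have E1 := Hk 1; have E2 := Hk 2%:R; have E3 := Hk 3%:R.
  move: E0 E1 E2 E3; rewrite !summxE !big_ord_recl !big_ord0 /= !mxE /=.
  rewrite /Zq4 /sn /cs /lm.
  move=> E0 E1 E2 E3. split; lra.
- case=> k1 [k2 [Hne [Z1 Z2 Z3 Z4]]].
  exists (fun i : 'I_2 => [:: k1; k2]`_i); split.
    case: Hne => [H|H]; [exists ord0|exists (lift ord0 ord0)]; exact: H.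
  apply/rowP => j; rewrite summxE !big_ord_recl big_ord0 /= !mxE.
  move: Z1 Z2 Z3 Z4; rewrite /sn /cs /lm => Z1 Z2 Z3 Z4.
  case: (ord4_cases j) => -> /=; lra.
Qed.
End S.


Section S3.
Variable R : realType.
Implicit Types g : cstr R.

Lemma pt3_inj (a b c a' b' c' : R) : pt3 a b c = pt3 a' b' c' -> [/\ a = a', b = b' & c = c'].
Proof.
move=> /rowP H; have := H 0; have := H 1; have := H 2%:R.
by rewrite !mxE /= => -> -> ->.
Qed.

Lemma pt3_lin (a b c a' b' c' t : R) : pt3 a b c + t *: pt3 a' b' c' = pt3 (a + t * a') (b + t * b') (c + t * c').
Proof.
by apply/rowP => j; rewrite !mxE; case: j => [[|[|[|n]]] Hj] //=.
Qed.

Lemma pt3_dot (x y z a b c : R) : ((pt3 x y z) *m (pt3 a b c)^T) 0 0 = x * a + y * b + z * c.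
Proof. by rewrite !mxE !big_ord_recl big_ord0 !mxE /= addr0 addrA. Qed.

Lemma line_ofE g p : orthogonal_c g -> line_of g p <-> exists t, p = pt3 (t * cs g) (t * sn g) (lm g).
Proof.
rewrite /orthogonal_c /line_of /c_base /c_dir => Hd /=; split.
- by case=> t ->; exists t; rewrite pt3_lin Hd mulr0 !add0r addr0.
- by case=> t ->; exists t; rewrite pt3_lin Hd mulr0 !add0r addr0.
Qed.

Lemma conc_iff (s : seq (cstr R)) : (forall g, g \in s -> orthogonal_c g) ->
  concurrent_l0 s <-> exists t, forall g, g \in s -> lm g = t.
Proof.
move=> Ho; split.
- case=> q [[t ->] Hq]; exists t => g Hg.
  have /(line_ofE _ (Ho g Hg)) [tau /pt3_inj [_ _ ->]] := Hq g Hg; by [].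
- case=> t Ht; exists (pt3 0 0 t); split; first by exists t.
  move=> g Hg; apply/(line_ofE _ (Ho g Hg)); exists 0; by rewrite !mul0r Ht.
Qed.

Lemma cop_iff (s : seq (cstr R)) : (forall g, g \in s -> orthogonal_c g) ->
  coplanar_l0 s <-> exists m0 m1 : R, (m0 != 0 \/ m1 != 0) /\
     forall g, g \in s -> m0 * cs g + m1 * sn g = 0.
Proof.
move=> Ho; split.
- case=> n [c [Hn [Hl Hs]]].
  have En : n = pt3 (n 0 0) (n 0 1) (n 0 2%:R).
    by apply/rowP => j; rewrite !mxE; case: j => [[|[|[|k]]] Hj] //=; congr (n _ _); apply/val_inj.
  have H0 : c = 0.
    have := Hl (pt3 0 0 0) (ex_intro _ 0 erefl); rewrite /plane_c /= En pt3_dot => <-; ring.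
  have H2 : n 0 2%:R = 0.
    have := Hl (pt3 0 0 1) (ex_intro _ 1 erefl); rewrite /plane_c /= {1}En pt3_dot H0 => <-; ring.
  exists (n 0 0), (n 0 1); split.
    apply: contrapT => /not_orP [/negP/negPn/eqP h0 /negP/negPn/eqP h1]; move/eqP: Hn; apply.
    by rewrite En h0 h1 H2; apply/rowP => j; rewrite !mxE; case: j => [[|[|[|k]]] Hj] //=.
  move=> g Hg; have := Hs g Hg (pt3 (1 * cs g) (1 * sn g) (lm g)).
  rewrite /plane_c /= {1}En pt3_dot H0 H2 => H.
  have := H (proj2 (line_ofE _ (Ho g Hg)) (ex_intro _ 1 erefl)); lra.
- case=> m0 [m1 [Hm Hs]]; exists (pt3 m0 m1 0), 0; split; [|split].
  + apply/negP => /eqP H.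
    have : pt3 m0 m1 0 = pt3 0 0 0 by rewrite H; apply/rowP => j; rewrite !mxE; case: j => [[|[|[|k]]] Hj] //=.
    by case/pt3_inj => h0 h1 _; case: Hm; rewrite ?h0 ?h1 eqxx.
  + by move=> p [t ->]; rewrite /plane_c /= pt3_dot; ring.
  + move=> g Hg p /(line_ofE _ (Ho g Hg)) [t ->]; rewrite /plane_c /= pt3_dot.
    have := Hs g Hg => h.
    have -> : t * cs g * m0 + t * sn g * m1 + lm g * 0 = t * (m0 * cs g + m1 * sn g) by ring.
    by rewrite h mulr0.
Qed.
End S3.


Section S4.
Variable R : realType.
Implicit Types g : cstr R.

Lemma eq_sub (x y : R) : x - y = 0 -> x = y.
Proof. by move=> h; apply/eqP; rewrite -subr_eq0 h. Qed.

Lemma par_facts (c1 s1 c2 s2 : R) : c1^+2 + s1^+2 = 1 -> c2^+2 + s2^+2 = 1 ->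
  s1 * c2 = s2 * c1 ->
  [/\ c2 = (c1 * c2 + s1 * s2) * c1, s2 = (c1 * c2 + s1 * s2) * s1 & (c1 * c2 + s1 * s2)^+2 = 1].
Proof.
move=> u1 u2 hp.
have hu1 : c1^+2 + s1^+2 - 1 = 0 by rewrite u1 subrr.
have hu2 : c2^+2 + s2^+2 - 1 = 0 by rewrite u2 subrr.
have hp' : s1 * c2 - s2 * c1 = 0 by rewrite hp subrr.
split; apply: eq_sub.
- have -> : c2 - (c1 * c2 + s1 * s2) * c1 = s1 * (s1 * c2 - s2 * c1) - c2 * (c1^+2 + s1^+2 - 1) by ring.
  by rewrite hp' hu1; ring.
- have -> : s2 - (c1 * c2 + s1 * s2) * s1 = - c1 * (s1 * c2 - s2 * c1) - s2 * (c1^+2 + s1^+2 - 1) by ring.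
  by rewrite hp' hu1; ring.
- have -> : (c1 * c2 + s1 * s2)^+2 - 1 = - (s1 * c2 - s2 * c1)^+2 + (c1^+2 + s1^+2 - 1) * (c2^+2 + s2^+2) + (c2^+2 + s2^+2 - 1) by ring.
  by rewrite hp' hu1 hu2; ring.
Qed.

Definition par g1 g2 := sn g1 * cs g2 = sn g2 * cs g1.

Lemma pair_alg (k1 k2 l1 l2 c1 s1 c2 s2 : R) : c1^+2 + s1^+2 = 1 -> c2^+2 + s2^+2 = 1 ->
  (k1 != 0 \/ k2 != 0) -> k1 * s1 + k2 * s2 = 0 -> k1 * c1 + k2 * c2 = 0 ->
  k1 * l1 * s1 + k2 * l2 * s2 = 0 -> k1 * l1 * c1 + k2 * l2 * c2 = 0 ->
  l1 = l2 /\ s1 * c2 = s2 * c1.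
Proof.
move=> u1 u2 Hk e1 e2 e3 e4.
have hx1 : k1 * (s1 * c2 - s2 * c1) = 0.
  have -> : k1 * (s1 * c2 - s2 * c1) = c2 * (k1 * s1 + k2 * s2) - s2 * (k1 * c1 + k2 * c2) by ring.
  by rewrite e1 e2; ring.
have hx2 : k2 * (s1 * c2 - s2 * c1) = 0.
  have -> : k2 * (s1 * c2 - s2 * c1) = - c1 * (k1 * s1 + k2 * s2) + s1 * (k1 * c1 + k2 * c2) by ring.
  by rewrite e1 e2; ring.
have hl1 : k1 * (l1 - l2) = 0.
  have -> : k1 * (l1 - l2) = k1 * (l1 - l2) * (c1^+2 + s1^+2) by rewrite u1 mulr1.
  have -> : k1 * (l1 - l2) * (c1^+2 + s1^+2) = c1 * (k1 * l1 * c1 + k2 * l2 * c2 - l2 * (k1 * c1 + k2 * c2)) + s1 * (k1 * l1 * s1 + k2 * l2 * s2 - l2 * (k1 * s1 + k2 * s2)) by ring.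
  by rewrite e1 e2 e3 e4; ring.
have hl2 : k2 * (l1 - l2) = 0.
  have -> : k2 * (l1 - l2) = k2 * (l1 - l2) * (c2^+2 + s2^+2) by rewrite u2 mulr1.
  have -> : k2 * (l1 - l2) * (c2^+2 + s2^+2) = - c2 * (k1 * l1 * c1 + k2 * l2 * c2 - l1 * (k1 * c1 + k2 * c2)) - s2 * (k1 * l1 * s1 + k2 * l2 * s2 - l1 * (k1 * s1 + k2 * s2)) by ring.
  by rewrite e1 e2 e3 e4; ring.
case: Hk => Hk.
- move/eqP: hx1; move/eqP: hl1; rewrite !mulf_eq0 (negPf Hk) /= => /eqP h1 /eqP h2.
  by split; apply: eq_sub.
- move/eqP: hx2; move/eqP: hl2; rewrite !mulf_eq0 (negPf Hk) /= => /eqP h1 /eqP h2.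
  by split; apply: eq_sub.
Qed.

Lemma dep2_iff g1 g2 : dependent_c [:: g1; g2] <-> lm g1 = lm g2 /\ par g1 g2.
Proof.
rewrite dep2E; split.
- case=> k1 [k2 [Hk [Z1 Z2 Z3 Z4]]].
  apply: (pair_alg (k1:=k1) (k2:=k2) (unitcs g1) (unitcs g2) Hk); lra.
- case=> hl hp.
  have [hc hs hd] := par_facts (unitcs g1) (unitcs g2) hp.
  exists 1, (- (cs g1 * cs g2 + sn g1 * sn g2)); split; first by left; exact: oner_neq0.
  set d := cs g1 * cs g2 + sn g1 * sn g2 in hc hs hd *.
  rewrite /Zq4 -hl hc hs; split; apply: eq_sub.
  + have -> : 1 * sn g1 + - d * (d * sn g1) + 0 * sn g1 + 0 * sn g1 - 0 = sn g1 * (1 - d^+2) by ring.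
    by rewrite hd subrr mulr0.
  + have -> : 1 * cs g1 + - d * (d * cs g1) + 0 * cs g1 + 0 * cs g1 - 0 = cs g1 * (1 - d^+2) by ring.
    by rewrite hd subrr mulr0.
  + have -> : 1 * lm g1 * sn g1 + - d * lm g1 * (d * sn g1) + 0 * lm g1 * sn g1 + 0 * lm g1 * sn g1 - 0 = lm g1 * sn g1 * (1 - d^+2) by ring.
    by rewrite hd subrr mulr0.
  + have -> : 1 * lm g1 * cs g1 + - d * lm g1 * (d * cs g1) + 0 * lm g1 * cs g1 + 0 * lm g1 * cs g1 - 0 = lm g1 * cs g1 * (1 - d^+2) by ring.
    by rewrite hd subrr mulr0.
Qed.

Lemma line_eq_iff g1 g2 : orthogonal_c g1 -> orthogonal_c g2 ->
  line_of g1 = line_of g2 <-> lm g1 = lm g2 /\ par g1 g2.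
Proof.
move=> o1 o2; split.
- move=> H.
  have : line_of g2 (pt3 (1 * cs g1) (1 * sn g1) (lm g1)).
    by rewrite -H; apply/line_ofE => //; exists 1.
  case/(line_ofE _ o2) => t /pt3_inj [h1 h2 h3]; split => //.
  rewrite /par; move: h1 h2; rewrite !mul1r => -> ->; ring.
- case=> hl hp.
  have [hc hs hd] := par_facts (unitcs g1) (unitcs g2) hp.
  set d := cs g1 * cs g2 + sn g1 * sn g2 in hc hs hd.
  have dd : forall x t : R, t * x = t * d * (d * x).
    move=> x t; apply: eq_sub.
    have -> : t * x - t * d * (d * x) = t * x * (1 - d^+2) by ring.
    by rewrite hd subrr mulr0.
  apply/seteqP; split => p.
  + case/(line_ofE _ o1) => t ->; apply/(line_ofE _ o2); exists (t * d).
    by rewrite hc hs -hl -!dd.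
  + case/(line_ofE _ o2) => t ->; apply/(line_ofE _ o1); exists (t * d).
    by rewrite hc hs -hl !mulrA.
Qed.
End S4.


Section S5.
Variable R : realType.
Implicit Types g : cstr R.

Lemma mul0h (a x y : R) : x = y -> a * (x - y) = 0.
Proof. by move=> ->; rewrite subrr mulr0. Qed.

Lemma triple_alg (k1 k2 k3 l1 l2 l3 c1 s1 c2 s2 c3 s3 : R) :
  k1 != 0 -> k2 != 0 -> k3 != 0 ->
  k1 * s1 + k2 * s2 + k3 * s3 = 0 -> k1 * c1 + k2 * c2 + k3 * c3 = 0 ->
  k1 * l1 * s1 + k2 * l2 * s2 + k3 * l3 * s3 = 0 ->
  k1 * l1 * c1 + k2 * l2 * c2 + k3 * l3 * c3 = 0 ->
  (l1 = l2 /\ l1 = l3) \/ (s1 * c2 = s2 * c1 /\ s1 * c3 = s3 * c1).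
Proof.
move=> n1 n2 n3 e1 e2 e3 e4.
have hX1 : k1 * k2 * (s1 * c2 - s2 * c1) + k1 * k3 * (s1 * c3 - s3 * c1) = 0.
  have := mul0h (k1 * s1) e2; have := mul0h (k1 * c1) e1; lra.
have hL1 : l2 * (k1 * k2 * (s1 * c2 - s2 * c1)) + l3 * (k1 * k3 * (s1 * c3 - s3 * c1)) = 0.
  have := mul0h (k1 * s1) e4; have := mul0h (k1 * c1) e3; lra.
have hX2 : k2 * k1 * (s2 * c1 - s1 * c2) + k2 * k3 * (s2 * c3 - s3 * c2) = 0.
  have := mul0h (k2 * s2) e2; have := mul0h (k2 * c2) e1; lra.
have hL2 : l1 * (k2 * k1 * (s2 * c1 - s1 * c2)) + l3 * (k2 * k3 * (s2 * c3 - s3 * c2)) = 0.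
  have := mul0h (k2 * s2) e4; have := mul0h (k2 * c2) e3; lra.
set X := k1 * k2 * (s1 * c2 - s2 * c1).
have hA : (l2 - l3) * X = 0.
  have := mul0h l3 hX1; rewrite /X; lra.
have hB : (l1 - l3) * X = 0.
  have := mul0h l3 hX2; rewrite /X; lra.
have [X0|Xn] := eqVneq X 0.
- right.
  have c12 : s1 * c2 - s2 * c1 = 0.
    by move/eqP: X0; rewrite /X !mulf_eq0 (negPf n1) (negPf n2) /= => /eqP.
  have c13 : s1 * c3 - s3 * c1 = 0.
    move: hX1; rewrite c12 mulr0 add0r => /eqP; rewrite !mulf_eq0 (negPf n1) (negPf n3) /=.
    by move/eqP.
  by split; apply: eq_sub.
- left.
  have ha : l2 - l3 = 0 by apply/eqP; move/eqP: hA; rewrite mulf_eq0 (negPf Xn) orbF.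
  have hb : l1 - l3 = 0 by apply/eqP; move/eqP: hB; rewrite mulf_eq0 (negPf Xn) orbF.
  split; apply: eq_sub; lra.
Qed.

Lemma unit_neq0 (c s : R) : c^+2 + s^+2 = 1 -> c != 0 \/ s != 0.
Proof.
move=> u; apply: contrapT => /not_orP [/negP/negPn/eqP h1 /negP/negPn/eqP h2].
by move: u; rewrite h1 h2 expr0n /= addr0 => /eqP; rewrite eq_sym oner_eq0.
Qed.

Lemma sq1_neq0 (d : R) : d^+2 = 1 -> d != 0.
Proof. by move=> h; apply/negP => /eqP h0; move: h; rewrite h0 expr0n /= => /eqP; rewrite eq_sym oner_eq0. Qed.

Lemma dep3_iff g1 g2 g3 : dependent_c [:: g1; g2; g3] <->
  (dependent_c [:: g1; g2] \/ dependent_c [:: g1; g3] \/ dependent_c [:: g2; g3]) \/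
  (lm g1 = lm g2 /\ lm g1 = lm g3) \/ (par g1 g2 /\ par g1 g3).
Proof.
have conc : lm g1 = lm g2 -> lm g1 = lm g3 -> dependent_c [:: g1; g2; g3].
  move=> h12 h13.
  have [c12|c12] := eqVneq (sn g1 * cs g2 - sn g2 * cs g1) 0.
  - have [c13|c13] := eqVneq (sn g1 * cs g3 - sn g3 * cs g1) 0.
    +
      apply/dep3E.
      have := proj2 (dep2_iff g1 g2) (conj h12 (eq_sub c12)).
      case/dep2E => k1 [k2 [Hk [Z1 Z2 Z3 Z4]]].
      exists k1, k2, 0; split; first by tauto.
      by move: Z1 Z2 Z3 Z4; rewrite /Zq4 => Z1 Z2 Z3 Z4; split; lra.
    + apply/dep3E; exists (sn g2 * cs g3 - sn g3 * cs g2), (sn g3 * cs g1 - sn g1 * cs g3), (sn g1 * cs g2 - sn g2 * cs g1).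
      split; first by right; left; apply: contra c13 => /eqP h; apply/eqP; lra.
      by rewrite /Zq4 -h12 -h13; split; lra.
  - apply/dep3E; exists (sn g2 * cs g3 - sn g3 * cs g2), (sn g3 * cs g1 - sn g1 * cs g3), (sn g1 * cs g2 - sn g2 * cs g1).
    split; first by right; right.
    by rewrite /Zq4 -h12 -h13; split; lra.
split.
- case/dep3E => k1 [k2 [k3 [Hk [Z1 Z2 Z3 Z4]]]].
  have [z1|n1] := eqVneq k1 0.
    left; right; right; apply/dep2E; exists k2, k3; split.
      by case: Hk => [|[|]]; [rewrite z1 eqxx|left|right].
    by move: Z1 Z2 Z3 Z4; rewrite /Zq4 z1 => Z1 Z2 Z3 Z4; split; lra.
  have [z2|n2] := eqVneq k2 0.
    left; right; left; apply/dep2E; exists k1, k3; split; first by left.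
    by move: Z1 Z2 Z3 Z4; rewrite /Zq4 z2 => Z1 Z2 Z3 Z4; split; lra.
  have [z3|n3] := eqVneq k3 0.
    left; left; apply/dep2E; exists k1, k2; split; first by left.
    by move: Z1 Z2 Z3 Z4; rewrite /Zq4 z3 => Z1 Z2 Z3 Z4; split; lra.
  right.
  have := @triple_alg k1 k2 k3 (lm g1) (lm g2) (lm g3) (cs g1) (sn g1) (cs g2) (sn g2) (cs g3) (sn g3) n1 n2 n3.
  rewrite /par; apply; lra.
- case => [[|[]]|[[h12 h13]|[p12 p13]]].
  + case/dep2E => k1 [k2 [Hk [Z1 Z2 Z3 Z4]]]; apply/dep3E; exists k1, k2, 0; split; first by tauto.
    by move: Z1 Z2 Z3 Z4; rewrite /Zq4 => Z1 Z2 Z3 Z4; split; lra.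
  + case/dep2E => k1 [k2 [Hk [Z1 Z2 Z3 Z4]]]; apply/dep3E; exists k1, 0, k2; split; first by tauto.
    by move: Z1 Z2 Z3 Z4; rewrite /Zq4 => Z1 Z2 Z3 Z4; split; lra.
  + case/dep2E => k1 [k2 [Hk [Z1 Z2 Z3 Z4]]]; apply/dep3E; exists 0, k1, k2; split; first by tauto.
    by move: Z1 Z2 Z3 Z4; rewrite /Zq4 => Z1 Z2 Z3 Z4; split; lra.
  + exact: conc.
  + have [hc2 hs2 hd2] := par_facts (unitcs g1) (unitcs g2) p12.
    have [hc3 hs3 hd3] := par_facts (unitcs g1) (unitcs g3) p13.
    set d2 := cs g1 * cs g2 + sn g1 * sn g2 in hc2 hs2 hd2.
    set d3 := cs g1 * cs g3 + sn g1 * sn g3 in hc3 hs3 hd3.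
    have [e32|n32] := eqVneq (lm g3 - lm g2) 0.
    * have [e13|n13] := eqVneq (lm g1 - lm g3) 0.
        apply: conc; apply: eq_sub; first by have := e32; have := e13; lra.
        by [].
      apply/dep3E; exists (lm g3 - lm g2), ((lm g1 - lm g3) * d2), ((lm g2 - lm g1) * d3).
      split; first by right; left; rewrite mulf_neq0 // sq1_neq0.
      rewrite /Zq4 hc2 hs2 hc3 hs3.
      have f1 := mul0h (sn g1 * (lm g1 - lm g3)) hd2.
      have f2 := mul0h (sn g1 * (lm g2 - lm g1)) hd3.
      have f3 := mul0h (cs g1 * (lm g1 - lm g3)) hd2.
      have f4 := mul0h (cs g1 * (lm g2 - lm g1)) hd3.
      have f5 := mul0h (lm g2 * sn g1 * (lm g1 - lm g3)) hd2.
      have f6 := mul0h (lm g3 * sn g1 * (lm g2 - lm g1)) hd3.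
      have f7 := mul0h (lm g2 * cs g1 * (lm g1 - lm g3)) hd2.
      have f8 := mul0h (lm g3 * cs g1 * (lm g2 - lm g1)) hd3.
      split; lra.
    * apply/dep3E; exists (lm g3 - lm g2), ((lm g1 - lm g3) * d2), ((lm g2 - lm g1) * d3).
      split; first by left.
      rewrite /Zq4 hc2 hs2 hc3 hs3.
      have f1 := mul0h (sn g1 * (lm g1 - lm g3)) hd2.
      have f2 := mul0h (sn g1 * (lm g2 - lm g1)) hd3.
      have f3 := mul0h (cs g1 * (lm g1 - lm g3)) hd2.
      have f4 := mul0h (cs g1 * (lm g2 - lm g1)) hd3.
      have f5 := mul0h (lm g2 * sn g1 * (lm g1 - lm g3)) hd2.
      have f6 := mul0h (lm g3 * sn g1 * (lm g2 - lm g1)) hd3.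
      have f7 := mul0h (lm g2 * cs g1 * (lm g1 - lm g3)) hd2.
      have f8 := mul0h (lm g3 * cs g1 * (lm g2 - lm g1)) hd3.
      split; lra.
Qed.
End S5.


Section S6.
Variable R : realType.
Implicit Types g : cstr R.

Definition Pq4 (p q r w : R) g := p * lm g * cs g + q * cs g + r * lm g * sn g + w * sn g = 0.

Definition Nmat g1 g2 g3 g4 : 'M[R]_4 :=
  \matrix_(i < 4, j < 4) (let g := nth g1 [:: g1; g2; g3; g4] i in
     [:: lm g * cs g; cs g; lm g * sn g; sn g]`_j).

Lemma row4_neq0 (v : 'rV[R]_4) : v != 0 ->
  v 0 ord0 != 0 \/ v 0 (lift ord0 ord0) != 0 \/ v 0 (lift ord0 (lift ord0 ord0)) != 0 \/
  v 0 (lift ord0 (lift ord0 (lift ord0 ord0))) != 0.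
Proof.
move=> Hv; apply: contrapT => H; move/eqP: Hv; apply; apply/rowP => j.
rewrite (ord1 0) !mxE in H *.
case: (ord4_cases j) => ->; apply/eqP; apply: contrapT => /negP h; tauto.
Qed.

Lemma dep4_pq g1 g2 g3 g4 : dependent_c [:: g1; g2; g3; g4] <->
  exists p q r w, (p != 0 \/ q != 0 \/ r != 0 \/ w != 0) /\
    [/\ Pq4 p q r w g1, Pq4 p q r w g2, Pq4 p q r w g3 & Pq4 p q r w g4].
Proof.
rewrite dep4E; split.
- case=> k1 [k2 [k3 [k4 [Hk [Z1 Z2 Z3 Z4]]]]].
  have : \det (Nmat g1 g2 g3 g4) == 0.
    apply/det0P; exists (\row_(i < 4) [:: k1; k2; k3; k4]`_i).
      apply/negP => /eqP /rowP H; move: (H ord0) (H (lift ord0 ord0)) (H (lift ord0 (lift ord0 ord0)))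
        (H (lift ord0 (lift ord0 (lift ord0 ord0)))); rewrite !mxE /=.
      move=> h1 h2 h3 h4; move: Hk; rewrite h1 h2 h3 h4 eqxx; by case=> [|[|[|]]].
    apply/rowP => j; rewrite !mxE !big_ord_recl big_ord0 !mxE /=.
    move: Z1 Z2 Z3 Z4; rewrite /sn /cs /lm => Z1 Z2 Z3 Z4.
    case: (ord4_cases j) => -> /=; lra.
  rewrite -det_tr => /det0P [v Hv Hvm].
  exists (v 0 ord0), (v 0 (lift ord0 ord0)), (v 0 (lift ord0 (lift ord0 ord0))), (v 0 (lift ord0 (lift ord0 (lift ord0 ord0)))).
  split; first exact: row4_neq0.
  move/rowP: Hvm => H.
  move: (H ord0) (H (lift ord0 ord0)) (H (lift ord0 (lift ord0 ord0))) (H (lift ord0 (lift ord0 (lift ord0 ord0)))).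
  rewrite !mxE !big_ord_recl !big_ord0 !mxE /= /Pq4 => E1 E2 E3 E4.
  split; lra.
- case=> p [q [r [w [Hp [P1 P2 P3 P4]]]]].
  have : \det (Nmat g1 g2 g3 g4)^T == 0.
    apply/det0P; exists (\row_(i < 4) [:: p; q; r; w]`_i).
      apply/negP => /eqP /rowP H; move: (H ord0) (H (lift ord0 ord0)) (H (lift ord0 (lift ord0 ord0)))
        (H (lift ord0 (lift ord0 (lift ord0 ord0)))); rewrite !mxE /=.
      by move=> h1 h2 h3 h4; move: Hp; rewrite h1 h2 h3 h4 eqxx; by case=> [|[|[|]]].
    apply/rowP => j; rewrite !mxE !big_ord_recl big_ord0 !mxE /=.
    move: P1 P2 P3 P4; rewrite /Pq4 => P1 P2 P3 P4.
    case: (ord4_cases j) => -> /=; lra.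
  rewrite det_tr => /det0P [v Hv Hvm].
  exists (v 0 ord0), (v 0 (lift ord0 ord0)), (v 0 (lift ord0 (lift ord0 ord0))), (v 0 (lift ord0 (lift ord0 (lift ord0 ord0)))).
  split; first exact: row4_neq0.
  move/rowP: Hvm => H.
  move: (H ord0) (H (lift ord0 ord0)) (H (lift ord0 (lift ord0 ord0))) (H (lift ord0 (lift ord0 (lift ord0 ord0)))).
  rewrite !mxE !big_ord_recl !big_ord0 !mxE /= /Zq4 /sn /cs /lm => E1 E2 E3 E4.
  split; lra.
Qed.
End S6.


Section S7.
Variable R : realType.
Implicit Types g : cstr R.

Definition amat (p q r w : R) : 'M[R]_(3 + 1) :=
  \matrix_(i, j) (nth 0 (nth [::] [:: [:: 0; 0; p; q]; [:: 0; 0; r; w]; [:: p; r; 0; 0]; [:: q; w; 0; 0]] i) j).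

Lemma ph4E (x y z : R) : row_mx (pt3 x y z) (1 : 'rV_1) = \row_(j < 3 + 1) [:: x; y; z; 1]`_j.
Proof.
apply/rowP => j; rewrite !mxE; case: splitP => [j' e|k e].
- rewrite e !mxE; case: j' {e} => [[|[|[|n]]] Hn] //.
- by rewrite e (ord1 k) !mxE.
Qed.

Lemma quad_amat (p q r w x y z : R) :
  quad_val (amat p q r w) (pt3 x y z) = 2 * (x * (p * z + q) + y * (r * z + w)).
Proof.
rewrite /quad_val ph4E !mxE !big_ord_recl !big_ord0 !mxE /=.
rewrite !big_ord_recl !big_ord0 !mxE /=.
ring.
Qed.

Definition bmat (p q r w : R) : 'M[R]_(3 + 1) :=
  \matrix_(i, j) (nth 0 (nth [::] [:: [:: 0; 0; w; -r]; [:: 0; 0; -q; p]; [:: w; -q; 0; 0]; [:: -r; p; 0; 0]] i) j).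

Lemma nondeg_amat (p q r w : R) : p * w - q * r != 0 -> nondeg_quadric (amat p q r w).
Proof.
move=> HD; split.
- apply/matrixP => i j; rewrite !mxE.
  by case: (ord4_cases i) => ->; case: (ord4_cases j) => ->.
- have E : amat p q r w *m bmat p q r w = (p * w - q * r)%:M.
    apply/matrixP => i j; rewrite !mxE !big_ord_recl !big_ord0 !mxE /=.
    by case: (ord4_cases i) => ->; case: (ord4_cases j) => -> /=; ring.
  apply/negP => /eqP H0.
  have := congr1 determinant E; rewrite det_mulmx H0 mul0r det_scalar => /esym/eqP.
  by rewrite expf_eq0 (negPf HD) andbF.
Qed.

Lemma pt3_scale (k a b c : R) : k *: pt3 a b c = pt3 (k * a) (k * b) (k * c).
Proof. by apply/rowP => j; rewrite !mxE; case: j => [[|[|[|n]]] Hj] //=. Qed.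

Lemma mul0h' (a x : R) : x = 0 -> a * x = 0.
Proof. by move=> ->; rewrite mulr0. Qed.

Lemma same_ruling_pq (p q r w : R) g h : p * w - q * r != 0 ->
  orthogonal_c g -> orthogonal_c h -> Pq4 p q r w g -> Pq4 p q r w h -> same_ruling g h.
Proof.
move=> HD og oh Pg Ph.
have [el|nl] := eqVneq (lm g) (lm h).
- left; apply/line_eq_iff => //; split => //.
  rewrite /par.
  set a0 := p * lm g + q; set a1 := r * lm g + w.
  have ea : a0 * cs g + a1 * sn g = 0 by move: Pg; rewrite /Pq4 /a0 /a1; lra.
  have eb : a0 * cs h + a1 * sn h = 0 by move: Ph; rewrite /Pq4 /a0 /a1 el; lra.
  have x0 : a0 * (sn g * cs h - sn h * cs g) = 0.
    have := mul0h' (sn g) eb; have := mul0h' (sn h) ea; lra.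
  have x1 : a1 * (sn g * cs h - sn h * cs g) = 0.
    have := mul0h' (cs g) eb; have := mul0h' (cs h) ea; lra.
  have [a0z|a0n] := eqVneq a0 0.
  + have [a1z|a1n] := eqVneq a1 0.
      exfalso; move/eqP: HD; apply.
      have hq : q = - (p * lm g) by move: a0z; rewrite /a0; lra.
      have hw : w = - (r * lm g) by move: a1z; rewrite /a1; lra.
      rewrite hq hw; ring.
    apply: eq_sub; apply/eqP; move/eqP: x1; by rewrite mulf_eq0 (negPf a1n).
  + apply: eq_sub; apply/eqP; move/eqP: x0; by rewrite mulf_eq0 (negPf a0n).
- right; split.
  + apply/seteqP; split => // x [/(line_ofE _ og) [t1 ->] /(line_ofE _ oh) [t2 /pt3_inj [_ _ e]]].
    by move/eqP: nl; apply.
  + rewrite /parallel_c /c_dir => -[k].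
    move: og oh; rewrite /orthogonal_c pt3_scale => -> -> /pt3_inj [ec es _].
    set a0 := p * lm g + q; set a1 := r * lm g + w.
    set b0 := p * lm h + q; set b1 := r * lm h + w.
    have eb : b0 * cs h + b1 * sn h = 0 by move: Ph; rewrite /Pq4 /b0 /b1; lra.
    have ea' : k * (a0 * cs h + a1 * sn h) = 0.
      by move: Pg; rewrite /Pq4 /a0 /a1 /cs /sn ec es; lra.
    have hk : k ^+ 2 = 1.
      have := unitcs g; rewrite /cs /sn ec es => u.
      have := unitcs h => u'; have := mul0h (k ^+ 2) u'; move: u u'; rewrite /cs /sn; lra.
    have ea : a0 * cs h + a1 * sn h = 0.
      have := mul0h' k ea'; have := mul0h (a0 * cs h + a1 * sn h) hk; lra.
    have cr : (p * w - q * r) * (lm g - lm h) = a0 * b1 - a1 * b0 by rewrite /a0 /a1 /b0 /b1; ring.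
    have cz : a0 * b1 - a1 * b0 = 0.
      have := mul0h (a0 * b1 - a1 * b0) (unitcs h).
      have := mul0h' (sn h * a0) eb; have := mul0h' (sn h * b0) ea.
      have := mul0h' (cs h * a1) eb; have := mul0h' (cs h * b1) ea.
      lra.
    move/eqP: cr; rewrite cz mulf_eq0 (negPf HD) /= subr_eq0 (negPf nl) //.
Qed.
End S7.


Section S8.
Variable R : realType.
Implicit Types g : cstr R.

Definition ix0 : 'I_(3 + 1) := ord0.
Definition ix1 : 'I_(3 + 1) := lift ord0 ord0.
Definition ix2 : 'I_(3 + 1) := lift ord0 (lift ord0 ord0).
Definition ix3 : 'I_(3 + 1) := lift ord0 (lift ord0 (lift ord0 ord0)).

Lemma quad_gen (A : 'M[R]_(3 + 1)) x y z : quad_val A (pt3 x y z) =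
  x * x * A ix0 ix0 + x * y * (A ix0 ix1 + A ix1 ix0) + x * z * (A ix0 ix2 + A ix2 ix0) + x * (A ix0 ix3 + A ix3 ix0)
  + y * y * A ix1 ix1 + y * z * (A ix1 ix2 + A ix2 ix1) + y * (A ix1 ix3 + A ix3 ix1)
  + z * z * A ix2 ix2 + z * (A ix2 ix3 + A ix3 ix2) + A ix3 ix3.
Proof.
rewrite /quad_val ph4E !mxE !big_ord_recl !big_ord0 !mxE /=.
rewrite !big_ord_recl !big_ord0 !mxE /= /ix0 /ix1 /ix2 /ix3.
ring.
Qed.

Lemma quad3 (a b c l1 l2 l3 : R) : l1 != l2 -> l1 != l3 -> l2 != l3 ->
  a * l1 ^+ 2 + b * l1 + c = 0 -> a * l2 ^+ 2 + b * l2 + c = 0 -> a * l3 ^+ 2 + b * l3 + c = 0 ->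
  [/\ a = 0, b = 0 & c = 0].
Proof.
move=> n12 n13 n23 f1 f2 f3.
have h12 : (l1 - l2) * (a * (l1 + l2) + b) = 0 by lra.
have h13 : (l1 - l3) * (a * (l1 + l3) + b) = 0 by lra.
have g12 : a * (l1 + l2) + b = 0.
  by apply/eqP; move/eqP: h12; rewrite mulf_eq0 subr_eq0 (negPf n12).
have g13 : a * (l1 + l3) + b = 0.
  by apply/eqP; move/eqP: h13; rewrite mulf_eq0 subr_eq0 (negPf n13).
have h23 : a * (l2 - l3) = 0 by lra.
have a0 : a = 0.
  by apply/eqP; move/eqP: h23; rewrite mulf_eq0 subr_eq0 (negPf n23) orbF.
have b0 : b = 0 by move: g12; rewrite a0; lra.
split => //; move: f1; rewrite a0 b0; lra.
Qed.

Lemma disj_lm g h : orthogonal_c g -> orthogonal_c h ->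
  line_of g `&` line_of h = set0 -> lm g != lm h.
Proof.
move=> og oh H; apply/negP => /eqP e.
have : (line_of g `&` line_of h) (pt3 0 0 (lm g)).
  split; [apply/(line_ofE _ og)|apply/(line_ofE _ oh)]; exists 0; by rewrite !mul0r ?e.
by rewrite H.
Qed.

Lemma in4 (P : cstr R -> Prop) g1 g2 g3 g4 : P g1 -> P g2 -> P g3 -> P g4 ->
  forall g, g \in [:: g1; g2; g3; g4] -> P g.
Proof.
by move=> h1 h2 h3 h4 g; rewrite !inE => /orP[/eqP->|/orP[/eqP->|/orP[/eqP->|/eqP->]]].
Qed.

Lemma quad_line (A : 'M[R]_(3 + 1)) g t : on_quadric A g -> orthogonal_c g ->
  quad_val A (pt3 (t * cs g) (t * sn g) (lm g)) = 0.
Proof. by move=> H o; apply: H; apply/(line_ofE _ o); exists t. Qed.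

Lemma hyp_pq g1 g2 g3 g4 : orthogonal_c g1 -> orthogonal_c g2 -> orthogonal_c g3 -> orthogonal_c g4 ->
  hyperboloidal [:: g1; g2; g3; g4] ->
  (line_of g1 = line_of g2 \/ line_of g1 = line_of g3 \/ line_of g1 = line_of g4 \/
   line_of g2 = line_of g3 \/ line_of g2 = line_of g4 \/ line_of g3 = line_of g4) \/
  exists p q r w, (p != 0 \/ q != 0 \/ r != 0 \/ w != 0) /\
    [/\ Pq4 p q r w g1, Pq4 p q r w g2, Pq4 p q r w g3 & Pq4 p q r w g4].
Proof.
move=> o1 o2 o3 o4 [A [[HT HD] [Hon Hsr]]].
have m1 : g1 \in [:: g1; g2; g3; g4] by rewrite !inE eqxx.
have m2 : g2 \in [:: g1; g2; g3; g4] by rewrite !inE eqxx !orbT.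
have m3 : g3 \in [:: g1; g2; g3; g4] by rewrite !inE eqxx !orbT.
have m4 : g4 \in [:: g1; g2; g3; g4] by rewrite !inE eqxx !orbT.
case: (Hsr _ _ m1 m2) => [e|[d12 _]]; first by left; left.
case: (Hsr _ _ m1 m3) => [e|[d13 _]]; first by left; right; left.
case: (Hsr _ _ m2 m3) => [e|[d23 _]]; first by left; right; right; right; left.
have n12 := disj_lm o1 o2 d12; have n13 := disj_lm o1 o3 d13; have n23 := disj_lm o2 o3 d23.
right.
have sym : forall i j, A i j = A j i by move=> i j; rewrite -{1}HT mxE.
have Q := fun g t (H : g \in [:: g1; g2; g3; g4]) o => @quad_line A g t (Hon g H) o.
have Q10 := Q _ 0 m1 o1; have Q20 := Q _ 0 m2 o2; have Q30 := Q _ 0 m3 o3.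
rewrite !quad_gen in Q10 Q20 Q30.
have [a0 b0 c0] : [/\ A ix2 ix2 = 0, A ix2 ix3 + A ix3 ix2 = 0 & A ix3 ix3 = 0].
  apply: (quad3 n12 n13 n23); lra.
exists (A ix0 ix2 + A ix2 ix0), (A ix0 ix3 + A ix3 ix0), (A ix1 ix2 + A ix2 ix1), (A ix1 ix3 + A ix3 ix1); split.
  apply: contrapT => H.
  have z : forall x : R, ~ (x != 0) -> x = 0 by move=> x /negP/negPn/eqP.
  have [z1 z2 z3 z4] : [/\ A ix0 ix2 + A ix2 ix0 = 0, A ix0 ix3 + A ix3 ix0 = 0,
      A ix1 ix2 + A ix2 ix1 = 0 & A ix1 ix3 + A ix3 ix1 = 0].
    by split; apply: z => h; apply: H; tauto.
  move/eqP: HD; apply; apply/eqP/det0P.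
  exists (\row_(j < 3 + 1) [:: 0; 0; 0; 1]`_j).
    by apply/negP => /eqP/rowP/(_ ix3); rewrite !mxE /= => /eqP; rewrite oner_eq0.
  apply/rowP => j; rewrite !mxE !big_ord_recl !big_ord0 !mxE /=.
  have s1 := sym ix0 ix3; have s2 := sym ix1 ix3; have s3 := sym ix2 ix3.
  move: s1 s2 s3 z2 z4 b0 c0; rewrite /ix0 /ix1 /ix2 /ix3.
  by case: (ord4_cases j) => -> s1 s2 s3 z2 z4 b0 c0; lra.
have P := fun g (H : g \in [:: g1; g2; g3; g4]) o =>
  conj (@quad_line A g 1 (Hon g H) o) (@quad_line A g (-1) (Hon g H) o).
rewrite /Pq4; split.
- by case: (P _ m1 o1); rewrite !quad_gen; lra.
- by case: (P _ m2 o2); rewrite !quad_gen; lra.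
- by case: (P _ m3 o3); rewrite !quad_gen; lra.
- by case: (P _ m4 o4); rewrite !quad_gen; lra.
Qed.
End S8.


Section S9.
Variable R : realType.
Implicit Types g : cstr R.

Lemma degen (p q r w : R) : (p != 0 \/ q != 0 \/ r != 0 \/ w != 0) -> p * w - q * r = 0 ->
  exists a b m0 m1 : R, (a != 0 \/ b != 0) /\ (m0 != 0 \/ m1 != 0) /\
    forall l c s, p * l * c + q * c + r * l * s + w * s = (a * l + b) * (m0 * c + m1 * s).
Proof.
move=> Hn hd.
have [p0|pn] := eqVneq p 0.
- have [q0|qn] := eqVneq q 0.
  + exists r, w, 0, 1; split; last split.
    * by move: Hn; rewrite p0 q0 eqxx => -[|[|]].
    * by right; exact: oner_neq0.
    * by move=> l c s; rewrite p0 q0; ring.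
  + have r0 : r = 0.
      apply/eqP; move: hd; rewrite p0 mul0r sub0r => /eqP; rewrite oppr_eq0 mulf_eq0 (negPf qn) //.
    exists 0, 1, q, w; split; last split.
    * by right; exact: oner_neq0.
    * by left.
    * by move=> l c s; rewrite p0 r0; ring.
- exists p, q, 1, (r / p); split; last split.
  + by left.
  + by left; exact: oner_neq0.
  + move=> l c s.
    have hw : w = q * r / p by apply: (mulIf pn); rewrite divfK //; lra.
    rewrite hw; field; exact: pn.
Qed.

Lemma perp_par (m0 m1 : R) g h : (m0 != 0 \/ m1 != 0) ->
  m0 * cs g + m1 * sn g = 0 -> m0 * cs h + m1 * sn h = 0 -> par g h.
Proof.
move=> Hm eg eh; rewrite /par.
have x0 : m0 * (sn g * cs h - sn h * cs g) = 0.
  have := mul0h' (sn g) eh; have := mul0h' (sn h) eg; lra.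
have x1 : m1 * (sn g * cs h - sn h * cs g) = 0.
  have := mul0h' (cs g) eh; have := mul0h' (cs h) eg; lra.
apply: eq_sub; case: Hm => Hm.
- by apply/eqP; move/eqP: x0; rewrite mulf_eq0 (negPf Hm).
- by apply/eqP; move/eqP: x1; rewrite mulf_eq0 (negPf Hm).
Qed.

Lemma zz (a b l1 l2 : R) : (a != 0 \/ b != 0) -> a * l1 + b = 0 -> a * l2 + b = 0 -> l1 = l2.
Proof.
move=> Hab e1 e2.
have h : a * (l1 - l2) = 0 by lra.
have [a0|an] := eqVneq a 0.
  by exfalso; move: e1 Hab; rewrite a0 mul0r add0r => ->; rewrite eqxx => -[|].
by apply: eq_sub; apply/eqP; move/eqP: h; rewrite mulf_eq0 (negPf an).
Qed.

Lemma combo (T : Type) (Z P : T -> Prop) (D3 : T -> T -> T -> Prop) (C2 P2 : T -> T -> Prop)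
  (g1 g2 g3 g4 : T) :
  (forall a b c, Z a -> Z b -> Z c -> D3 a b c) ->
  (forall a b c, P a -> P b -> P c -> D3 a b c) ->
  (forall a b, Z a -> Z b -> C2 a b) -> (forall a b, P a -> P b -> P2 a b) ->
  Z g1 \/ P g1 -> Z g2 \/ P g2 -> Z g3 \/ P g3 -> Z g4 \/ P g4 ->
  (D3 g1 g2 g3 \/ D3 g1 g2 g4 \/ D3 g1 g3 g4 \/ D3 g2 g3 g4) \/
  ((C2 g1 g2 /\ P2 g3 g4) \/ (C2 g1 g3 /\ P2 g2 g4) \/ (C2 g1 g4 /\ P2 g2 g3) \/
   (C2 g2 g3 /\ P2 g1 g4) \/ (C2 g2 g4 /\ P2 g1 g3) \/ (C2 g3 g4 /\ P2 g1 g2)).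
Proof.
move=> HZ HP HC HQ h1 h2 h3 h4.
case: h1 => h1; case: h2 => h2; case: h3 => h3; case: h4 => h4;
first [ left; first [ left; by apply: HZ | left; by apply: HP
                    | right; left; by apply: HZ | right; left; by apply: HP
                    | right; right; left; by apply: HZ | right; right; left; by apply: HP
                    | right; right; right; by apply: HZ | right; right; right; by apply: HP ]
      | right; first [ left; split; [by apply: HC | by apply: HQ]
                     | right; left; split; [by apply: HC | by apply: HQ]
                     | right; right; left; split; [by apply: HC | by apply: HQ]
                     | right; right; right; left; split; [by apply: HC | by apply: HQ]
                     | right; right; right; right; left; split; [by apply: HC | by apply: HQ]
                     | right; right; right; right; right; split; [by apply: HC | by apply: HQ] ] ].
Qed.
End S9.


Section S10.
Variable R : realType.
Implicit Types g : cstr R.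

Lemma in2 (P : cstr R -> Prop) g1 g2 : P g1 -> P g2 -> forall g, g \in [:: g1; g2] -> P g.
Proof. by move=> h1 h2 g; rewrite !inE => /orP[/eqP->|/eqP->]. Qed.

Lemma in3 (P : cstr R -> Prop) g1 g2 g3 : P g1 -> P g2 -> P g3 -> forall g, g \in [:: g1; g2; g3] -> P g.
Proof. by move=> h1 h2 h3 g; rewrite !inE => /orP[/eqP->|/orP[/eqP->|/eqP->]]. Qed.

Lemma conc2E (a b : cstr R) : orthogonal_c a -> orthogonal_c b -> concurrent_l0 [:: a; b] <-> lm a = lm b.
Proof.
move=> oa ob; rewrite conc_iff; last exact: in2.
split.
- by case=> t Ht; rewrite (Ht a) ?(Ht b) // !inE eqxx ?orbT.
- by move=> e; exists (lm a); apply: in2.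
Qed.

Lemma cop2E (a b : cstr R) : orthogonal_c a -> orthogonal_c b -> coplanar_l0 [:: a; b] <->
  exists m0 m1 : R, (m0 != 0 \/ m1 != 0) /\ m0 * cs a + m1 * sn a = 0 /\ m0 * cs b + m1 * sn b = 0.
Proof.
move=> oa ob; rewrite cop_iff; last exact: in2.
split.
- case=> m0 [m1 [Hm H]]; exists m0, m1; split => //.
  by split; apply: H; rewrite !inE eqxx ?orbT.
- case=> m0 [m1 [Hm [ha hb]]]; exists m0, m1; split => //; exact: in2.
Qed.

Lemma conc3E g1 g2 g3 : orthogonal_c g1 -> orthogonal_c g2 -> orthogonal_c g3 ->
  concurrent_l0 [:: g1; g2; g3] <-> lm g1 = lm g2 /\ lm g1 = lm g3.
Proof.
move=> o1 o2 o3; rewrite conc_iff; last exact: in3.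
split.
- by case=> t Ht; rewrite (Ht g1) ?(Ht g2) ?(Ht g3) // !inE eqxx ?orbT.
- by case=> e2 e3; exists (lm g1); apply: in3.
Qed.

Lemma cop3E g1 g2 g3 : orthogonal_c g1 -> orthogonal_c g2 -> orthogonal_c g3 ->
  coplanar_l0 [:: g1; g2; g3] <-> par g1 g2 /\ par g1 g3.
Proof.
move=> o1 o2 o3; rewrite cop_iff; last exact: in3.
split.
- case=> m0 [m1 [Hm H]].
  have h1 := H g1 (mem_head _ _).
  have h2 : m0 * cs g2 + m1 * sn g2 = 0 by apply: H; rewrite !inE eqxx ?orbT.
  have h3 : m0 * cs g3 + m1 * sn g3 = 0 by apply: H; rewrite !inE eqxx ?orbT.
  by split; apply: (perp_par Hm).
- case=> p2 p3; exists (- sn g1), (cs g1); split.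
    case: (unit_neq0 (unitcs g1)) => h; [right => //|left; by rewrite oppr_eq0].
  apply: in3; move: p2 p3; rewrite /par => p2 p3; lra.
Qed.

Lemma t123 g1 g2 g3 g4 : dependent_c [:: g1; g2; g3] -> dependent_c [:: g1; g2; g3; g4].
Proof.
case/dep3E => k1 [k2 [k3 [Hk [Z1 Z2 Z3 Z4]]]]; apply/dep4E; exists k1, k2, k3, 0; split; first tauto.
by move: Z1 Z2 Z3 Z4; rewrite /Zq4 => Z1 Z2 Z3 Z4; split; lra.
Qed.
Lemma t124 g1 g2 g3 g4 : dependent_c [:: g1; g2; g4] -> dependent_c [:: g1; g2; g3; g4].
Proof.
case/dep3E => k1 [k2 [k3 [Hk [Z1 Z2 Z3 Z4]]]]; apply/dep4E; exists k1, k2, 0, k3; split; first tauto.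
by move: Z1 Z2 Z3 Z4; rewrite /Zq4 => Z1 Z2 Z3 Z4; split; lra.
Qed.
Lemma t134 g1 g2 g3 g4 : dependent_c [:: g1; g3; g4] -> dependent_c [:: g1; g2; g3; g4].
Proof.
case/dep3E => k1 [k2 [k3 [Hk [Z1 Z2 Z3 Z4]]]]; apply/dep4E; exists k1, 0, k2, k3; split; first tauto.
by move: Z1 Z2 Z3 Z4; rewrite /Zq4 => Z1 Z2 Z3 Z4; split; lra.
Qed.
Lemma t234 g1 g2 g3 g4 : dependent_c [:: g2; g3; g4] -> dependent_c [:: g1; g2; g3; g4].
Proof.
case/dep3E => k1 [k2 [k3 [Hk [Z1 Z2 Z3 Z4]]]]; apply/dep4E; exists 0, k1, k2, k3; split; first tauto.
by move: Z1 Z2 Z3 Z4; rewrite /Zq4 => Z1 Z2 Z3 Z4; split; lra.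
Qed.

Lemma hyp_of_pq g1 g2 g3 g4 (p q r w : R) :
  orthogonal_c g1 -> orthogonal_c g2 -> orthogonal_c g3 -> orthogonal_c g4 ->
  p * w - q * r != 0 ->
  Pq4 p q r w g1 -> Pq4 p q r w g2 -> Pq4 p q r w g3 -> Pq4 p q r w g4 ->
  hyperboloidal [:: g1; g2; g3; g4].
Proof.
move=> o1 o2 o3 o4 HD P1 P2 P3 P4.
have key : forall g, g \in [:: g1; g2; g3; g4] -> orthogonal_c g /\ Pq4 p q r w g.
  by apply: in4; split.
exists (amat p q r w); split; first exact: nondeg_amat.
split.
- move=> g /key [og Pg] x /(line_ofE _ og) [t ->]; rewrite quad_amat.
  have := mul0h' t Pg; rewrite /Pq4; lra.
- move=> g h /key [og Pg] /key [oh Ph]; exact: (same_ruling_pq HD og oh Pg Ph).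
Qed.

Lemma iii_pq (a b c d : cstr R) : orthogonal_c a -> orthogonal_c b -> orthogonal_c c -> orthogonal_c d ->
  concurrent_l0 [:: a; b] -> coplanar_l0 [:: c; d] ->
  exists p q r w, (p != 0 \/ q != 0 \/ r != 0 \/ w != 0) /\
    [/\ Pq4 p q r w a, Pq4 p q r w b, Pq4 p q r w c & Pq4 p q r w d].
Proof.
move=> oa ob oc od /(conc2E oa ob) e /(cop2E oc od) [m0 [m1 [Hm [hc hd]]]].
exists m0, (- (lm a * m0)), m1, (- (lm a * m1)); split; first tauto.
rewrite /Pq4; split.
- lra.
- rewrite -e; lra.
- have := mul0h' (lm c - lm a) hc; lra.
- have := mul0h' (lm d - lm a) hd; lra.
Qed.
End S10.


Unset Implicit Arguments.

Theorem lemma21 (R : realType) :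
  (forall g1 g2 : cstr R, orthogonal_c g1 -> orthogonal_c g2 ->
     (dependent_c [:: g1; g2] <-> line_of g1 = line_of g2)) /\
  (forall g1 g2 g3 : cstr R, orthogonal_c g1 -> orthogonal_c g2 -> orthogonal_c g3 ->
     (dependent_c [:: g1; g2; g3] <->
        ((dependent_c [:: g1; g2] \/ dependent_c [:: g1; g3] \/ dependent_c [:: g2; g3])
         \/ coplanar_l0 [:: g1; g2; g3]
         \/ concurrent_l0 [:: g1; g2; g3]))) /\
  (forall g1 g2 g3 g4 : cstr R,
     orthogonal_c g1 -> orthogonal_c g2 -> orthogonal_c g3 -> orthogonal_c g4 ->
     (dependent_c [:: g1; g2; g3; g4] <->
        ((dependent_c [:: g1; g2; g3] \/ dependent_c [:: g1; g2; g4] \/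
          dependent_c [:: g1; g3; g4] \/ dependent_c [:: g2; g3; g4])
         \/ hyperboloidal [:: g1; g2; g3; g4]
         \/ ((concurrent_l0 [:: g1; g2] /\ coplanar_l0 [:: g3; g4]) \/
             (concurrent_l0 [:: g1; g3] /\ coplanar_l0 [:: g2; g4]) \/
             (concurrent_l0 [:: g1; g4] /\ coplanar_l0 [:: g2; g3]) \/
             (concurrent_l0 [:: g2; g3] /\ coplanar_l0 [:: g1; g4]) \/
             (concurrent_l0 [:: g2; g4] /\ coplanar_l0 [:: g1; g3]) \/
             (concurrent_l0 [:: g3; g4] /\ coplanar_l0 [:: g1; g2]))))).
Proof.
split; [|split].
- move=> g1 g2 o1 o2.
  exact: (iff_trans (dep2_iff g1 g2) (iff_sym (line_eq_iff o1 o2))).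
- move=> g1 g2 g3 o1 o2 o3.
  have := conc3E o1 o2 o3; have := cop3E o1 o2 o3; have := dep3_iff g1 g2 g3; tauto.
- move=> g1 g2 g3 g4 o1 o2 o3 o4.
  have p2 : forall a b c : cstr R, dependent_c [:: a; b] -> dependent_c [:: a; b; c].
    by move=> a b c h; apply/dep3_iff; left; left.
  have p3 : forall a b c : cstr R, dependent_c [:: a; c] -> dependent_c [:: a; b; c].
    by move=> a b c h; apply/dep3_iff; left; right; left.
  have p4 : forall a b c : cstr R, dependent_c [:: b; c] -> dependent_c [:: a; b; c].
    by move=> a b c h; apply/dep3_iff; left; right; right.
  have le : forall a b : cstr R, orthogonal_c a -> orthogonal_c b ->
      line_of a = line_of b -> dependent_c [:: a; b].
    by move=> a b oa ob h; apply/dep2_iff; apply/(line_eq_iff oa ob).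
  split.
  + case/dep4_pq => p [q [r [w [Hn [P1 P2 P3 P4]]]]].
    have [HD|HD] := eqVneq (p * w - q * r) 0; last first.
      by right; left; exact: (hyp_of_pq o1 o2 o3 o4 HD P1 P2 P3 P4).
    have [a [b [m0 [m1 [Hab [Hm Hid]]]]]] := degen Hn HD.
    pose Z := fun g : cstr R => orthogonal_c g /\ a * lm g + b = 0.
    pose P := fun g : cstr R => orthogonal_c g /\ m0 * cs g + m1 * sn g = 0.
    have ZP : forall g, orthogonal_c g -> Pq4 p q r w g -> Z g \/ P g.
      move=> g og; rewrite /Pq4 Hid => /eqP; rewrite mulf_eq0 => /orP [/eqP h|/eqP h].
        by left.
      by right.
    have := @combo _ Z P (fun a b c => dependent_c [:: a; b; c]) (fun a b => concurrent_l0 [:: a; b])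
      (fun a b => coplanar_l0 [:: a; b]) g1 g2 g3 g4.
    case.
    * move=> x y z [ox hx] [oy hy] [oz hz]; apply/dep3_iff; right; left.
      by split; apply: (zz Hab).
    * move=> x y z [ox hx] [oy hy] [oz hz]; apply/dep3_iff; right; right.
      by split; apply: (perp_par Hm).
    * move=> x y [ox hx] [oy hy]; apply/(conc2E ox oy); exact: (zz Hab).
    * move=> x y [ox hx] [oy hy]; apply/(cop2E ox oy); exists m0, m1; tauto.
    * exact: ZP.
    * exact: ZP.
    * exact: ZP.
    * exact: ZP.
    * by left.
    * by right; right.
  + case => [[h|[h|[h|h]]]|[h|h]].
    * exact: t123.
    * exact: t124.
    * exact: t134.
    * exact: t234.
    * case: (hyp_pq o1 o2 o3 o4 h) => [[e|[e|[e|[e|[e|e]]]]]|[p [q [r [w [Hn [P1 P2 P3 P4]]]]]]].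
      -- by apply: t123; apply: p2; apply: le.
      -- by apply: t123; apply: p3; apply: le.
      -- by apply: t124; apply: p3; apply: le.
      -- by apply: t123; apply: p4; apply: le.
      -- by apply: t124; apply: p4; apply: le.
      -- by apply: t134; apply: p4; apply: le.
      -- by apply/dep4_pq; exists p, q, r, w.
    * apply/dep4_pq.
      case: h => [[h1 h2]|[[h1 h2]|[[h1 h2]|[[h1 h2]|[[h1 h2]|[h1 h2]]]]]].
      -- have [p [q [r [w [Hn [P1 P2 P3 P4]]]]]] := iii_pq o1 o2 o3 o4 h1 h2.
         by exists p, q, r, w.
      -- have [p [q [r [w [Hn [P1 P2 P3 P4]]]]]] := iii_pq o1 o3 o2 o4 h1 h2.
         by exists p, q, r, w.
      -- have [p [q [r [w [Hn [P1 P2 P3 P4]]]]]] := iii_pq o1 o4 o2 o3 h1 h2.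
         by exists p, q, r, w.
      -- have [p [q [r [w [Hn [P1 P2 P3 P4]]]]]] := iii_pq o2 o3 o1 o4 h1 h2.
         by exists p, q, r, w.
      -- have [p [q [r [w [Hn [P1 P2 P3 P4]]]]]] := iii_pq o2 o4 o1 o3 h1 h2.
         by exists p, q, r, w.
      -- have [p [q [r [w [Hn [P1 P2 P3 P4]]]]]] := iii_pq o3 o4 o1 o2 h1 h2.
         by exists p, q, r, w.
Qed.
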